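(* Let $\tilde f(x,\omega)=f(x,\mu(\omega))$ be a random feed-forward neural network of depth $I$, where $f$ is an infinite-width neural network and $\mu:\Omega\to\mathcal U$ is an $\mathcal F/\mathcal B(\mathcal U)$-measurable random parameter on a probability space $(\Omega,\mathcal F,\mathbb P)$. Then $\mathrm{size}(\tilde f)$, $\mathrm{Growth}(\tilde f)$ and $\mathrm{Lip}(\tilde f)$ are random variables.
   Context: Let $\mathcal X_0=\mathbb R^{d_1}$, $\mathcal X_i=\ell^2(\mathbb N)$ for $1\le i\le I$, $\mathcal X_{I+1}=\mathbb R^{d_3}$. The layer-$i$ parameter ($i=0,\dots,I$) is a vector measure $\mu_i=\sum_{m}w^{i+1}_m\delta_m$ ($m\in\{0,\dots,d_1\}$ if $i=0$, $m\in\{0,1,2,\dots\}$ otherwise) with $w^{i+1}_m\in\mathcal X_{i+1}$ and finite total variation norm $\|\mu_i\|_{TV}=\sum_m\|w^{i+1}_m\|$; $\mathcal U$ is the product of these Banach spaces with the product metric and Borel $\sigma$-algebra $\mathcal B(\mathcal U)$. The infinite-width network is $f=f_{I+1}\circ\cdots\circ f_1$, $f_1(x)=W^1x+b^1$, $f_{i+1}(y)=W^{i+1}\sigma(y)+b^{i+1}$, with $b^{i+1}=w^{i+1}_0$, $W^{i+1}y=\sum_{m\ge1}w^{i+1}_my_{m-1}$, and $\sigma$ the componentwise ReLU. Random variables: $\mathrm{size}(\tilde f)(\omega)$ = number of nonzero scalar entries of all $w^{i+1}_m(\mu(\omega))$ (a $[0,\infty]$-valued map); $\mathrm{Growth}(\tilde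 f)(\omega)=\sup_{x\in\mathbb R^{d_1}}\|\tilde f(x,\omega)\|/(1+\|x\|)$; $\mathrm{Lip}(\tilde f)(\omega)=\sup_{x\ne y}\|\tilde f(x,\omega)-\tilde f(y,\omega)\|/\|x-y\|$. *)

(* Defs.v *)
From HB Require Import structures.
From mathcomp Require Import all_boot all_order all_algebra.
From mathcomp Require Import all_classical all_reals all_analysis measurable_realfun.
Set Implicit Arguments. Unset Strict Implicit. Unset Printing Implicit Defensive.
Import Order.TTheory GRing.Theory Num.Theory.
Import numFieldNormedType.Exports.
Local Open Scope classical_set_scope.
Local Open Scope ring_scope.

(* Every space X_i (R^{d1}, l^2(N), R^{d3}) is encoded as a space of
   real sequences nat -> R: l^2(N) literally, and R^d as the sequences that
   vanish at all coordinates n >= d (an isometric identification).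
   A full parameter theta : nat -> nat -> nat -> R is read as
     theta i m n = n-th coordinate of w^{i+1}_m   (layer i = 0..I, atom m). *)

Section Defs.
Variable R : realType.

Definition Rd (d : nat) : set (nat -> R) := [set x | forall n, (d <= n)%N -> x n = 0].

Definition in_l2 (x : nat -> R) : Prop := (\sum_(n <oo) ((x n) ^+ 2)%:E < +oo)%E.
Definition l2norm (x : nat -> R) : R := Num.sqrt (fine (\sum_(n <oo) ((x n) ^+ 2)%:E)%E).

Variables (d1 d3 I : nat).

(* theta encodes an element of U = prod_{i=0}^I M(index set_i ; X_{i+1}) *)
Definition isParam (theta : nat -> nat -> nat -> R) : Prop :=
  [/\ (forall i m n, (I < i)%N -> theta i m n = 0),
      (forall m n, (d1 < m)%N -> theta 0%N m n = 0),
      (forall m, Rd d3 (theta I m)),                              (* X_{I+1} = R^{d3} *)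
      (forall i m, (i <= I)%N -> in_l2 (theta i m)) &
      (forall i, (i <= I)%N ->
          (\sum_(m <oo) (l2norm (theta i m))%:E < +oo)%E)].

Definition paramU := {theta : nat -> nat -> nat -> R | isParam theta}.

Definition distU (u v : paramU) : R :=
  \sum_(i < I.+1)
    fine (\sum_(m <oo) (l2norm (fun n => proj1_sig u i m n - proj1_sig v i m n))%:E)%E.

Definition openU (A : set paramU) : Prop :=
  forall u, A u -> exists2 e : R, 0 < e & forall v, distU u v < e -> A v.

Definition borelU : set (set paramU) := <<s setT, openU >>.

Definition relu (y : nat -> R) : nat -> R := fun n => Num.max (y n) 0.

(* affine map of layer i:  y |-> W^{i+1} y + b^{i+1},
   (W^{i+1} y)_n = sum_{m >= 1} w^{i+1}_m(n) y_{m-1} *)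
Definition layer (theta : nat -> nat -> nat -> R) (i : nat) (y : nat -> R) : nat -> R :=
  fun n => theta i 0%N n + limn (fun N => \sum_(1 <= m < N) theta i m n * y m.-1).

Fixpoint hidden (theta : nat -> nat -> nat -> R) (k : nat) (x : nat -> R) : nat -> R :=
  match k with
  | 0%N => layer theta 0 x
  | k'.+1 => layer theta k (relu (hidden theta k' x))
  end.

Definition net (theta : nat -> nat -> nat -> R) (x : nat -> R) : nat -> R := hidden theta I x.

Definition sizeN (theta : nat -> nat -> nat -> R) : \bar R :=
  (\sum_(i < I.+1) \sum_(m <oo) \sum_(n <oo) ((theta i m n != 0)%:R)%:E)%E.

Definition growthN (theta : nat -> nat -> nat -> R) : \bar R :=
  ereal_sup [set ((l2norm (net theta x)) / (1 + l2norm x))%:E | x in Rd d1].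

Definition lipN (theta : nat -> nat -> nat -> R) : \bar R :=
  ereal_sup [set e | exists x y, [/\ Rd d1 x, Rd d1 y, x <> y &
     e = ((l2norm (fun n => net theta x n - net theta y n))
            / l2norm (fun n => x n - y n))%:E]].

End Defs.

(* Main.v *)
Require Import Defs.
From HB Require Import structures.
From mathcomp Require Import all_boot all_order all_algebra.
From mathcomp Require Import all_classical all_reals all_analysis measurable_realfun.
From mathcomp Require Import ring lra.
Import Order.TTheory GRing.Theory Num.Theory.
Import numFieldNormedType.Exports.
Local Open Scope classical_set_scope.
Local Open Scope ring_scope.

Section Real.
Variable R : realType.

Lemma psum_cvg (g : nat -> R) (K : R) :
  (forall N, \sum_(0 <= m < N) `|g m| <= K) ->
  cvgn (series g) /\ `|limn (series g)| <= K.
Proof.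
move=> hK.
have c : cvgn [normed series g].
  apply: nondecreasing_is_cvgn.
    by apply: nondecreasing_series => n _ _; exact: normr_ge0.
  by exists K => _ [N _ <-]; exact: hK.
split; first exact: normed_cvg.
apply: le_trans (lim_series_norm c) _.
apply: limr_le => //; apply: nearW => N; exact: hK.
Qed.

Lemma sum1_series (f : nat -> R) N :
  \sum_(1 <= m < N) f m = series (fun m => if m is 0 then 0 else f m) N.
Proof.
rewrite /series /=; case: N => [|N]; first by rewrite !big_geq.
rewrite [in RHS]big_ltn // add0r; apply: eq_big_nat => m /andP[m1 _].
by case: m m1.
Qed.

Definition lsum (a y : nat -> R) : R :=
  limn (fun N => \sum_(1 <= m < N) a m * y m.-1).

Definition gfun (a y : nat -> R) (m : nat) : R :=
  if m is 0 then 0 else a m * y m.-1.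

Lemma lsumE a y : lsum a y = limn (series (gfun a y)).
Proof.
rewrite /lsum; have -> // : (fun N => \sum_(1 <= m < N) a m * y m.-1) = series (gfun a y).
by apply/funext => N; rewrite sum1_series; congr series; apply/funext => -[].
Qed.

Lemma psum_gfun (a y : nat -> R) (T B : R) :
  (forall N, \sum_(0 <= m < N) `|a m| <= T) -> (forall m, `|y m| <= B) ->
  forall N, \sum_(0 <= m < N) `|gfun a y m| <= T * B.
Proof.
move=> hT hB N.
have B0 : 0 <= B by apply: le_trans (hB 0%N).
apply: (@le_trans _ _ (\sum_(0 <= m < N) (`|a m| * B))).
  apply: ler_sum => -[|m] _ /=; first by rewrite normr0 mulr_ge0.
  by rewrite normrM ler_wpM2l.
by rewrite -mulr_suml ler_wpM2r.
Qed.

Lemma lsum_bound (a y : nat -> R) (T B : R) :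
  (forall N, \sum_(0 <= m < N) `|a m| <= T) -> (forall m, `|y m| <= B) ->
  `|a 0%N + lsum a y| <= T * (1 + B).
Proof.
move=> hT hB.
have [_ h] := psum_cvg _ _ (psum_gfun _ _ _ _ hT hB).
rewrite lsumE mulrDr mulr1; apply: le_trans (ler_normD _ _) _.
apply: lerD => //.
by have := hT 1%N; rewrite big_nat1.
Qed.

Lemma lsum_est (a a' y y' : nat -> R) (T D B e : R) :
  (forall N, \sum_(0 <= m < N) `|a m| <= T) ->
  (forall N, \sum_(0 <= m < N) `|a m - a' m| <= D) ->
  (forall m, `|y m| <= B) -> (forall m, `|y m - y' m| <= e) ->
  `|(a 0%N + lsum a y) - (a' 0%N + lsum a' y')| <= D * (1 + B) + (T + D) * e.
Proof.
move=> hT hD hB he.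
have hT' : forall N, \sum_(0 <= m < N) `|a' m| <= T + D.
  move=> N; apply: le_trans (lerD (hT N) (hD N)); rewrite -big_split /=.
  apply: ler_sum => m _.
  have -> : `|a' m| = `|a m - (a m - a' m)| by congr (Num.norm _); ring.
  exact: ler_normB.
have hB' : forall m, `|y' m| <= B + e.
  move=> m; have -> : `|y' m| = `|y m - (y m - y' m)| by congr (Num.norm _); ring.
  by apply: le_trans (ler_normB _ _) _; rewrite lerD.
have [c1 _] := psum_cvg _ _ (psum_gfun _ _ _ _ hT hB).
have [c2 _] := psum_cvg _ _ (psum_gfun _ _ _ _ hT' hB').
have hgg : forall N, \sum_(0 <= m < N)
    `|(gfun a y m - gfun a' y' m)| <= D * B + (T + D) * e.
  move=> N.
  apply: (@le_trans _ _ (\sum_(0 <= m < N) (`|a m - a' m| * B + `|a' m| * e))).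
    apply: ler_sum => -[|m] _ /=; first by rewrite subr0 normr0 addr_ge0 // mulr_ge0 // ?(le_trans _ (hB 0%N)) ?(le_trans _ (he 0%N)).
    have -> : a m.+1 * y m - a' m.+1 * y' m =
       (a m.+1 - a' m.+1) * y m + a' m.+1 * (y m - y' m) by ring.
    apply: le_trans (ler_normD _ _) _; rewrite !normrM.
    apply: lerD; [apply: ler_wpM2l | apply: ler_wpM2l] => //.
  rewrite big_split /= -!mulr_suml; apply: lerD.
    by apply: ler_wpM2r => //; apply: le_trans (hB 0%N).
  by apply: ler_wpM2r => //; apply: le_trans (he 0%N).
have [_ h3] := psum_cvg _ _ hgg.
have -> : (a 0%N + lsum a y) - (a' 0%N + lsum a' y') =
   (a 0%N - a' 0%N) + limn (series (fun m => gfun a y m - gfun a' y' m)).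
  rewrite !lsumE.
  have -> : series (fun m => gfun a y m - gfun a' y' m) =
     (series (gfun a y) - series (gfun a' y')).
    by apply/funext => N; rewrite /series /= sumrB.
  by rewrite limB //; ring.
apply: le_trans (ler_normD _ _) _.
rewrite mulrDr mulr1 -addrA; apply: lerD => //.
by have := hD 1%N; rewrite big_nat1.
Qed.


Lemma sq_series_ge0 (a : nat -> R) :
  (0 <= \sum_(k <oo) ((a k) ^+ 2)%:E)%E.
Proof. by apply: nneseries_ge0 => k _ _; rewrite lee_fin sqr_ge0. Qed.

Lemma l2_fin (a : nat -> R) : in_l2 a ->
  (\sum_(k <oo) ((a k) ^+ 2)%:E)%E \is a fin_num.
Proof. by move=> h; rewrite ge0_fin_numE // sq_series_ge0. Qed.

Lemma l2_coord (a : nat -> R) n : in_l2 a -> `|a n| <= l2norm a.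
Proof.
move=> h; have Sf := l2_fin _ h.
rewrite /l2norm.
have : ((a n ^+ 2)%:E <= \sum_(k <oo) ((a k) ^+ 2)%:E)%E.
  apply: le_trans (nneseries_lim_ge n.+1 _); last first.
    by move=> k _ _; rewrite lee_fin sqr_ge0.
  rewrite big_nat_recr //=; apply: leeDr.
  by apply: sume_ge0 => k _; rewrite lee_fin sqr_ge0.
rewrite -(fineK Sf) lee_fin => h2.
by rewrite -sqrtr_sqr ler_wsqrtr.
Qed.

Lemma l2norm_ge0 (a : nat -> R) : 0 <= l2norm a.
Proof. exact: sqrtr_ge0. Qed.

Lemma l2_sub (a b : nat -> R) : in_l2 a -> in_l2 b ->
  in_l2 (fun n => a n - b n) /\
  l2norm (fun n => a n - b n) <= 2 * (l2norm a + l2norm b).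
Proof.
move=> ha hb.
have le1 : (\sum_(k <oo) ((a k - b k) ^+ 2)%:E <=
    2%:E * \sum_(k <oo) ((a k) ^+ 2)%:E + 2%:E * \sum_(k <oo) ((b k) ^+ 2)%:E)%E.
  rewrite -!nneseriesZl; try by move=> k _; rewrite lee_fin sqr_ge0.
  rewrite -nneseriesD; try by move=> k _ _; rewrite -EFinM lee_fin mulr_ge0 // sqr_ge0.
  apply: lee_nneseries => [k _ _|k _]; first by rewrite lee_fin sqr_ge0.
  rewrite -!EFinM -EFinD lee_fin.
  have : 0 <= (a k + b k) ^+ 2 by exact: sqr_ge0.
  by move=> h; nra.
have Sa := l2_fin _ ha; have Sb := l2_fin _ hb.
have fin : (\sum_(k <oo) ((a k - b k) ^+ 2)%:E < +oo)%E.
  apply: (le_lt_trans le1).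
  by rewrite -(fineK Sa) -(fineK Sb) -!EFinM -EFinD ltry.
split => //.
have Sab := l2_fin _ fin.
move: le1; rewrite -(fineK Sa) -(fineK Sb) -(fineK Sab) -!EFinM -EFinD lee_fin.
rewrite /l2norm.
set x := fine _; set y := fine _; set z := fine _ => hz.
have x0 : 0 <= x by apply: fine_ge0; exact: sq_series_ge0.
have y0 : 0 <= y by apply: fine_ge0; exact: sq_series_ge0.
have z0 : 0 <= z by apply: fine_ge0; exact: sq_series_ge0.
have sy0 := sqrtr_ge0 y; have sz0 := sqrtr_ge0 z.
have hy := sqr_sqrtr y0; have hz2 := sqr_sqrtr z0.
have -> : 2 * (Num.sqrt y + Num.sqrt z) =
   Num.sqrt ((2 * (Num.sqrt y + Num.sqrt z)) ^+ 2).
  by rewrite sqrtr_sqr ger0_norm // mulr_ge0 // addr_ge0.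
rewrite ler_sqrt; last exact: sqr_ge0.
rewrite exprMn (sqrrD (Num.sqrt y)) hy hz2.
have := mulr_ge0 sy0 sz0.
move: (Num.sqrt y * Num.sqrt z) => p p0.
lra.
Qed.


Lemma relu_lip (a b : R) : `|Num.max a 0 - Num.max b 0| <= `|a - b|.
Proof.
have h1 := ler_norm (a - b); have h2 := ler_norm (b - a).
rewrite distrC in h2.
rewrite ler_norml; apply/andP; split.
  have [a0|a0] := lerP 0 a; have [b0|b0] := lerP 0 b;
   rewrite ?(max_l a0) ?(max_l b0) ?(max_r (ltW a0)) ?(max_r (ltW b0)); lra.
have [a0|a0] := lerP 0 a; have [b0|b0] := lerP 0 b;
   rewrite ?(max_l a0) ?(max_l b0) ?(max_r (ltW a0)) ?(max_r (ltW b0)); lra.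
Qed.

Lemma relu_bound (a : R) : `|Num.max a 0| <= `|a|.
Proof.
have [a0|a0] := lerP 0 a => //.
by rewrite normr0.
Qed.


Lemma sqrt_lip0 (x y : R) : 0 <= x -> 0 <= y ->
  `|x - y| <= Num.sqrt `|x ^+ 2 - y ^+ 2|.
Proof.
move=> x0 y0; rewrite -sqrtr_sqr; apply: ler_wsqrtr.
have [yx|xy] := lerP y x.
  rewrite ger0_norm; first by nra.
  by rewrite subr_ge0; nra.
rewrite ltr0_norm; first by nra.
by rewrite subr_lt0; nra.
Qed.

Lemma sqrt_lip (a b : R) : 0 <= a -> 0 <= b ->
  `|Num.sqrt a - Num.sqrt b| <= Num.sqrt `|a - b|.
Proof.
move=> a0 b0; have := sqrt_lip0 _ _ (sqrtr_ge0 a) (sqrtr_ge0 b).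
by rewrite !sqr_sqrtr.
Qed.

Lemma Rd_bound d (x : nat -> R) : Rd d x -> forall n,
  `|x n| <= \sum_(0 <= k < d) `|x k|.
Proof.
move=> hx n; have [nd|dn] := ltnP n d.
  rewrite big_mkord (bigD1 (Ordinal nd)) //= lerDl.
  by apply: sumr_ge0 => k _.
by rewrite hx // normr0; apply: sumr_ge0 => k _.
Qed.

Lemma l2norm_Rd d (w : nat -> R) : Rd d w ->
  l2norm w = Num.sqrt (\sum_(0 <= n < d) w n ^+ 2).
Proof.
move=> hw; rewrite /l2norm.
rewrite (@nneseries_split _ _ 0 d); last by move=> k _; rewrite lee_fin sqr_ge0.
rewrite add0n (@eseries0 _ _ d xpredT); last first.
  by move=> i di _; rewrite hw // expr0n.
by rewrite adde0 sumEFin.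
Qed.

Section Param.
Variables (d1 d3 I : nat).
Local Notation U := (paramU R d1 d3 I).
Local Notation th u := (proj1_sig u).

Lemma par_zero (u : U) i m n : (I < i)%N -> th u i m n = 0.
Proof. by case: (proj2_sig u) => h _ _ _ _; exact: h. Qed.

Lemma par_l2 (u : U) i m : (i <= I)%N -> in_l2 (th u i m).
Proof. by case: (proj2_sig u) => _ _ _ h _; exact: h. Qed.

Lemma par_tv (u : U) i : (i <= I)%N ->
  (\sum_(m <oo) (l2norm (th u i m))%:E < +oo)%E.
Proof. by case: (proj2_sig u) => _ _ _ _ h; exact: h. Qed.

Lemma l2ser_ge0 (a : nat -> nat -> R) :
  (0 <= \sum_(m <oo) (l2norm (a m))%:E)%E.
Proof. by apply: nneseries_ge0 => m _ _; rewrite lee_fin l2norm_ge0. Qed.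

Lemma psum_l2 (a : nat -> nat -> R) n :
  (forall m, in_l2 (a m)) -> (\sum_(m <oo) (l2norm (a m))%:E < +oo)%E ->
  forall N, \sum_(0 <= m < N) `|a m n| <= fine (\sum_(m <oo) (l2norm (a m))%:E).
Proof.
move=> h1 h2 N.
have fin : (\sum_(m <oo) (l2norm (a m))%:E)%E \is a fin_num.
  by rewrite ge0_fin_numE // l2ser_ge0.
apply: (@le_trans _ _ (\sum_(0 <= m < N) l2norm (a m))).
  by apply: ler_sum => m _; exact: l2_coord.
rewrite -lee_fin fineK // -sumEFin.
by apply: nneseries_lim_ge => m _ _; rewrite lee_fin l2norm_ge0.
Qed.

Definition TV (u : U) i := fine (\sum_(m <oo) (l2norm (th u i m))%:E).

Lemma TV_ge0 u i : 0 <= TV u i.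
Proof. exact/fine_ge0/l2ser_ge0. Qed.

Lemma psum_TV (u : U) i n N : \sum_(0 <= m < N) `|th u i m n| <= TV u i.
Proof.
have [iI|Ii] := leqP i I.
  by apply: psum_l2 => [m|]; [exact: par_l2 | exact: par_tv].
rewrite big1 ?TV_ge0 // => m _; by rewrite par_zero // normr0.
Qed.

Definition dser (u v : U) i :=
  (\sum_(m <oo) (l2norm (fun n => th u i m n - th v i m n))%:E)%E.

Lemma dser_fin (u v : U) i : (i <= I)%N -> (dser u v i < +oo)%E.
Proof.
move=> iI; rewrite /dser.
have hu := par_tv u i iI; have hv := par_tv v i iI.
apply: (@le_lt_trans _ _ (2%:E * \sum_(m <oo) (l2norm (th u i m))%:E +
                          2%:E * \sum_(m <oo) (l2norm (th v i m))%:E)%E).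
  rewrite -!nneseriesZl; try by move=> k _; rewrite lee_fin l2norm_ge0.
  rewrite -nneseriesD; try by move=> k _ _; rewrite -EFinM lee_fin mulr_ge0 // l2norm_ge0.
  apply: lee_nneseries => [k _ _|k _]; first by rewrite lee_fin l2norm_ge0.
  rewrite -!EFinM -EFinD lee_fin -mulrDr.
  by have [_ ->] := l2_sub _ _ (par_l2 u i k iI) (par_l2 v i k iI).
have fu : (\sum_(m <oo) (l2norm (th u i m))%:E)%E \is a fin_num.
  by rewrite ge0_fin_numE // l2ser_ge0.
have fv : (\sum_(m <oo) (l2norm (th v i m))%:E)%E \is a fin_num.
  by rewrite ge0_fin_numE // l2ser_ge0.
by rewrite -(fineK fu) -(fineK fv) -!EFinM -EFinD ltry.
Qed.

Lemma distU_ge0 (u v : U) : 0 <= distU u v.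
Proof. by apply: sumr_ge0 => i _; apply/fine_ge0/l2ser_ge0. Qed.

Lemma dser_le (u v : U) i : (i <= I)%N -> fine (dser u v i) <= distU u v.
Proof.
move=> iI; have iI' : (i < I.+1)%N by [].
rewrite /distU (bigD1 (Ordinal iI')) //= lerDl.
by apply: sumr_ge0 => j _; apply/fine_ge0/l2ser_ge0.
Qed.

Lemma psum_dist (u v : U) i n N :
  \sum_(0 <= m < N) `|th u i m n - th v i m n| <= distU u v.
Proof.
have [iI|Ii] := leqP i I; last first.
  rewrite big1 ?distU_ge0 // => m _; by rewrite !par_zero // subr0 normr0.
apply: le_trans (dser_le u v i iI).
apply: (psum_l2 (fun m n => th u i m n - th v i m n)) => [m|].
  by have [] := l2_sub _ _ (par_l2 u i m iI) (par_l2 v i m iI).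
exact: dser_fin.
Qed.

Lemma coord_dist (u v : U) i m n : `|th u i m n - th v i m n| <= distU u v.
Proof.
apply: le_trans (psum_dist u v i n m.+1).
rewrite big_nat_recr //= lerDr.
by apply: sumr_ge0 => k _.
Qed.




Definition ucont (w : (nat -> nat -> nat -> R) -> nat -> R) (u : U) :=
  forall eps : R, 0 < eps -> exists2 e : R, 0 < e &
    forall v : U, distU u v < e -> forall n, `|w (th u) n - w (th v) n| <= eps.

Lemma layer_lsum (t : nat -> nat -> nat -> R) i y n :
  layer t i y n = t i 0%N n + lsum (fun m => t i m n) y.
Proof. by []. Qed.

Lemma hidden_cont (u : U) (x : nat -> R) (B0 : R) : (forall n, `|x n| <= B0) ->
  forall k, (k <= I)%N ->
  (exists B, forall n, `|hidden (th u) k x n| <= B) /\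
  ucont (fun t => hidden t k x) u.
Proof.
move=> hx; have B00 : 0 <= B0 by apply: le_trans (hx 0%N).
elim => [_|k IH kI].
  split.
    exists (TV u 0 * (1 + B0)) => n /=; rewrite layer_lsum.
    by apply: lsum_bound => // N; exact: psum_TV.
  move=> eps eps0.
  have B01 : 0 < 1 + B0 by lra.
  exists (eps / (1 + B0)); first by rewrite divr_gt0.
  move=> v hv n /=; rewrite !layer_lsum.
  apply: le_trans (lsum_est _ _ _ _ (TV u 0) (distU u v) B0 0 _ _ hx _) _.
  - by move=> N; exact: psum_TV.
  - by move=> N; exact: psum_dist.
  - by move=> m; rewrite subrr normr0.
  by rewrite mulr0 addr0 -ler_pdivlMr // ltW.
have [[B hB] hc] := IH (ltnW kI).
have B0' : 0 <= B by apply: le_trans (hB 0%N).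
have hrB : forall m, `|relu (hidden (th u) k x) m| <= B.
  by move=> m; apply: le_trans (relu_bound _) (hB m).
split.
  exists (TV u k.+1 * (1 + B)) => n /=; rewrite layer_lsum.
  by apply: lsum_bound hrB => N; exact: psum_TV.
move=> eps eps0.
set T := TV u k.+1.
have T0 : 0 <= T by exact: TV_ge0.
set dl := eps / (2 * (T + 1)).
have dl0 : 0 < dl by rewrite divr_gt0 // mulr_gt0 //; lra.
have hdl : (T + 1) * dl = eps / 2.
  by rewrite /dl; field; lra.
have [e1 e10 he1] := hc dl dl0.
have eB : 0 < eps / (2 * (1 + B)) by rewrite divr_gt0 // mulr_gt0 //; lra.
exists (Num.min e1 (Num.min 1 (eps / (2 * (1 + B))))).
  by rewrite !lt_min e10 ltr01 eB.
move=> v; rewrite !lt_min => /andP[hv1 /andP[hv2 hv3]] n /=; rewrite !layer_lsum.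
apply: le_trans (lsum_est _ _ _ _ T (distU u v) B dl _ _ hrB _) _.
- by move=> N; exact: psum_TV.
- by move=> N; exact: psum_dist.
- move=> m; rewrite /relu; apply: le_trans (relu_lip _ _) _.
  exact: he1.
have D0 := distU_ge0 u v.
move: hv3; rewrite ltr_pdivlMr; last by rewrite mulr_gt0 //; lra.
move=> h1.
have h3 : distU u v * dl <= 1 * dl by rewrite ler_wpM2r // ?ltW.
clearbody dl.
move: hdl h1 h3 D0; move: (distU u v) => D hdl h1 h3 D0.
have e1' : D * (2 * (1 + B)) = 2 * D + 2 * (D * B) by ring.
have e2' : D * (1 + B) + (T + D) * dl = D + D * B + (T * dl + D * dl) by ring.
have e3' : (T + 1) * dl = T * dl + dl by ring.
rewrite e2'; rewrite e1' in h1; rewrite e3' in hdl; lra.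
Qed.

Definition LSC (F : (nat -> nat -> nat -> R) -> \bar R) : Prop :=
  forall a : R, Defs.openU (fun u : U => (a%:E < F (th u))%E).

Definition contU (h : (nat -> nat -> nat -> R) -> R) : Prop :=
  forall (u : U) (eps : R), 0 < eps -> exists2 e : R, 0 < e &
    forall v : U, distU u v < e -> `|h (th u) - h (th v)| < eps.

Lemma LSC_sup (S : (nat -> nat -> nat -> R) -> set (\bar R)) :
  (forall (u : U) z, S (th u) z -> exists h, [/\ contU h, z = (h (th u))%:E &
      forall v : U, S (th v) (h (th v))%:E]) ->
  LSC (fun t => ereal_sup (S t)).
Proof.
move=> hS a u /= /ereal_sup_gt [z Sz az].
have [h [ch ez hv]] := hS u z Sz.
rewrite ez lte_fin in az.
have [e e0 he] := ch u (h (th u) - a) (ltac:(by rewrite subr_gt0)).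
exists e => // v /he hv'.
apply: (lt_le_trans _ (ereal_sup_ubound (hv v))).
rewrite lte_fin.
have := ler_norm (h (th u) - h (th v)); lra.
Qed.

Lemma LSC_cst0 : LSC (fun _ => 0%E).
Proof. by move=> a u /= ha; exists 1 => // v _. Qed.

Lemma LSC_add f g : LSC f -> LSC g -> (forall t, (0 <= f t)%E) ->
  (forall t, (0 <= g t)%E) -> LSC (fun t => (f t + g t)%E).
Proof.
move=> hf hg f0 g0 a u /= ha.
have [a1 [a2 [ea h1 h2]]] : exists a1 a2, [/\ a = a1 + a2,
    (a1%:E < f (th u))%E & (a2%:E < g (th u))%E].
  move: ha (f0 (th u)) (g0 (th u)).
  case: (f (th u)) => [r| |]; case: (g (th u)) => [s| |] //= ha _ _.
  - exists (r - (r + s - a) / 2), (s - (r + s - a) / 2).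
    rewrite !lte_fin; rewrite lte_fin in ha; split; lra.
  - exists (r - 1), (a - r + 1); split; [lra | rewrite lte_fin; lra | exact: ltry].
  - exists (a - s + 1), (s - 1); split; [lra | exact: ltry | rewrite lte_fin; lra].
  - exists (a + 1), (-1); split; [lra | exact: ltry | exact: ltry].
have [e1 e10 he1] := hf a1 u h1.
have [e2 e20 he2] := hg a2 u h2.
exists (Num.min e1 e2); first by rewrite lt_min e10 e20.
move=> v; rewrite lt_min => /andP[v1 v2].
by rewrite ea EFinD; apply: lteD; [exact: he1 | exact: he2].
Qed.

Lemma LSC_ext f g : (forall t, f t = g t) -> LSC f -> LSC g.
Proof. by move=> e; have -> : f = g by apply/funext. Qed.

Lemma LSC_sum (F : nat -> (nat -> nat -> nat -> R) -> \bar R) :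
  (forall i, LSC (F i)) -> (forall i t, (0 <= F i t)%E) ->
  forall N, LSC (fun t => \sum_(0 <= i < N) F i t)%E.
Proof.
move=> hF F0; elim => [|N IH].
  by apply: (LSC_ext _ _ _ LSC_cst0) => t; rewrite big_geq.
apply: (@LSC_ext (fun t => \sum_(0 <= i < N) F i t + F N t)%E).
  by move=> t; rewrite big_nat_recr.
apply: LSC_add => // t.
by apply: sume_ge0 => i _.
Qed.

Lemma series_sup (f : nat -> \bar R) : (forall n, (0 <= f n)%E) ->
  (\sum_(n <oo) f n)%E = ereal_sup (range (fun N => \sum_(0 <= n < N) f n)%E).
Proof.
move=> f0; apply/cvg_lim => //.
apply: ereal_nondecreasing_cvgn.
by apply: ereal_nondecreasing_series => n _ _.
Qed.

Lemma LSC_series (F : nat -> (nat -> nat -> nat -> R) -> \bar R) :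
  (forall i, LSC (F i)) -> (forall i t, (0 <= F i t)%E) ->
  LSC (fun t => \sum_(i <oo) F i t)%E.
Proof.
move=> hF F0 a u /=; rewrite series_sup // => /ereal_sup_gt [z [N _ <-] hz].
have [e e0 he] := LSC_sum F hF F0 N a u hz.
exists e => // v /he /= hv.
apply: (lt_le_trans hv).
by apply: nneseries_lim_ge => n _ _.
Qed.

Lemma LSC_ind i m n : LSC (fun t => ((t i m n != 0)%:R)%:E).
Proof.
move=> a u /=.
case: eqP => [h0|/eqP nz].
  rewrite /= lte_fin mulr0n => a0; exists 1 => // v _.
  by case: (_ != _); rewrite lte_fin ?mulr0n ?mulr1n //; lra.
move=> ha; exists `|th u i m n|; first by rewrite normr_gt0.
move=> v hv; suff -> : (th v i m n != 0) by [].
apply/eqP => v0; have := coord_dist u v i m n.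
by rewrite v0 subr0; lra.
Qed.

Lemma LSC_size : LSC (sizeN I).
Proof.
apply: (@LSC_ext (fun t => \sum_(0 <= i < I.+1)
   \sum_(m <oo) \sum_(n <oo) ((t i m n != 0)%:R)%:E)%E).
  by move=> t; rewrite /sizeN big_mkord.
apply: LSC_sum => [i|i t].
  apply: LSC_series => [m|m t]; last by apply: nneseries_ge0 => n _ _; rewrite lee_fin.
  apply: LSC_series => [n|n t]; last by rewrite lee_fin.
  exact: LSC_ind.
apply: nneseries_ge0 => m _ _; apply: nneseries_ge0 => n _ _; by rewrite lee_fin.
Qed.

Lemma l2_cont (w : (nat -> nat -> nat -> R) -> nat -> R) :
  (forall v : U, Rd d3 (w (th v))) -> (forall u : U, ucont w u) ->
  contU (fun t => l2norm (w t)).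
Proof.
move=> hR hc u eps eps0.
set Bu := \sum_(0 <= n < d3) `|w (th u) n|.
have Bu0 : 0 <= Bu by apply: sumr_ge0 => k _.
set K := d3%:R * (2 * Bu + 1).
have K0 : 0 <= K by rewrite mulr_ge0 //; lra.
set q := eps ^+ 2 / (K + 1).
have eps2 : 0 < eps ^+ 2 by rewrite exprn_gt0.
have q0 : 0 < q by rewrite divr_gt0 //; lra.
have hq : q * (K + 1) = eps ^+ 2 by rewrite /q; field; lra.
set dl := Num.min 1 q.
have dl0 : 0 < dl by rewrite lt_min ltr01 q0.
have [e e0 he] := hc u dl dl0.
exists e => // v /he hv.
rewrite /= (l2norm_Rd _ _ (hR u)) (l2norm_Rd _ _ (hR v)).
apply: le_lt_trans (sqrt_lip _ _ (sumr_ge0 _ _) (sumr_ge0 _ _)) _;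
  try by move=> k _; exact: sqr_ge0.
have -> : eps = Num.sqrt (eps ^+ 2) by rewrite sqrtr_sqr gtr0_norm.
rewrite ltr_sqrt // -sumrB.
apply: le_lt_trans (ler_norm_sum _ _ _) _.
apply: (@le_lt_trans _ _ (\sum_(0 <= n < d3) (dl * (2 * Bu + 1)))).
  apply: ler_sum => n _.
  rewrite subr_sqr normrM.
  have h1 := hv n.
  have h2 : `|w (th u) n| <= Bu by exact: Rd_bound _ _ (hR u) n.
  have h3 : `|w (th u) n + w (th v) n| <= 2 * Bu + 1.
    have -> : w (th u) n + w (th v) n = 2 * w (th u) n - (w (th u) n - w (th v) n) by ring.
    apply: le_trans (ler_normB _ _) _; rewrite normrM ger0_norm //.
    have : dl <= 1 by rewrite ge_min lexx.
    lra.
  by apply: ler_pM => //; apply: ltW.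
rewrite sumr_const_nat subn0.
have hdq : dl <= q by rewrite ge_min lexx orbT.
have h4 : dl * K <= q * K by rewrite ler_wpM2r.
have e1 : dl * (2 * Bu + 1) *+ d3 = dl * K by rewrite /K -mulr_natl; ring.
rewrite e1.
have e2 : q * (K + 1) = q * K + q by ring.
lra.
Qed.

Lemma contU_scale (h : (nat -> nat -> nat -> R) -> R) (c : R) :
  contU h -> contU (fun t => h t * c).
Proof.
move=> hh u eps eps0.
have c1 : 0 < `|c| + 1 by have := normr_ge0 c; lra.
have [e e0 he] := hh u (eps / (`|c| + 1)) (divr_gt0 eps0 c1).
exists e => // v /he hv /=.
rewrite -mulrBl normrM.
apply: (@le_lt_trans _ _ (eps / (`|c| + 1) * `|c|)).
  by apply: ler_wpM2r => //; exact: ltW.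
rewrite mulrAC ltr_pdivrMr //.
have := normr_ge0 c; nra.
Qed.

Lemma net_Rd (u : U) x : Rd d3 (net I (th u) x).
Proof.
move=> n dn; rewrite /net.
have hz : forall m, th u I m n = 0.
  by case: (proj2_sig u) => _ _ h _ _ m; exact: h.
have key : forall y, layer (th u) I y n = 0.
  move=> y; rewrite layer_lsum hz add0r /lsum.
  have -> : (fun N => \sum_(1 <= m < N) th u I m n * y m.-1) = (fun _ => 0).
    by apply/funext => N; rewrite big1 // => m _; rewrite hz mul0r.
  exact: lim_cst.
have hl : forall k (t : nat -> nat -> nat -> R), exists y, hidden t k x = layer t k y.
  by case => [|k] t; [exists x | eexists].
have [y ->] := hl I (th u).
exact: key.
Qed.

Lemma net_ucont (x : nat -> R) : Rd d1 x -> forall u : U, ucont (fun t => net I t x) u.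
Proof.
move=> hx u.
have := hidden_cont u x _ (Rd_bound _ _ hx) I (leqnn I).
by case.
Qed.

Lemma LSC_growth : LSC (growthN d1 I).
Proof.
apply: LSC_sup => u z [x hx <-].
exists (fun t => l2norm (net I t x) / (1 + l2norm x)); split => //.
  apply: contU_scale; apply: l2_cont => [v|]; first exact: net_Rd.
  exact: net_ucont.
by move=> v; exists x.
Qed.

Lemma LSC_lip : LSC (lipN d1 I).
Proof.
apply: LSC_sup => u z [x [y [hx hy xy ->]]].
exists (fun t => l2norm (fun n => net I t x n - net I t y n) / l2norm (fun n => x n - y n)).
split => //; last by move=> v; exists x, y.
apply: contU_scale; apply: l2_cont => [v n dn|u' eps eps0].
  by rewrite /= !net_Rd // subr0.
have e2 : 0 < eps / 2 by rewrite divr_gt0.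
have [e1 e10 h1] := net_ucont x hx u' _ e2.
have [e3 e30 h3] := net_ucont y hy u' _ e2.
exists (Num.min e1 e3); first by rewrite lt_min e10 e30.
move=> v; rewrite lt_min => /andP[v1 v3] n /=.
have := h1 v v1 n; have := h3 v v3 n => /= a b.
have -> : net I (th u') x n - net I (th u') y n - (net I (th v) x n - net I (th v) y n)
  = (net I (th u') x n - net I (th v) x n) - (net I (th u') y n - net I (th v) y n) by ring.
apply: le_trans (ler_normB _ _) _; lra.
Qed.

Lemma LSC_meas d (Omega : measurableType d) (mu : Omega -> U)
  (mu_meas : forall B, borelU B -> measurable (mu @^-1` B)) F :
  LSC F -> measurable_fun setT (fun w => F (proj1_sig (mu w))).
Proof.
move=> hF.
apply: (@measurability _ _ _ _ _ _ (@ErealGenOInfty.G R)).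
  exact: ErealGenOInfty.measurableE.
move=> _ [_ [r ->] <-].
rewrite setTI.
have -> : (fun w => F (proj1_sig (mu w))) @^-1` `]r%:E, +oo[%classic =
   mu @^-1` (fun u : U => (r%:E < F (proj1_sig u))%E).
  by apply/seteqP; split => w /=; rewrite in_itv /= andbT.
apply: mu_meas; apply: sub_sigma_algebra; exact: hF.
Qed.
End Param.
End Real.

Theorem proposition3 (R : realType) (d1 d3 I : nat)
  (d : measure_display) (Omega : measurableType d) (P : probability Omega R)
  (mu : Omega -> paramU R d1 d3 I)
  (mu_meas : forall B, borelU B -> measurable (mu @^-1` B)) :
  [/\ measurable_fun setT ((fun w => sizeN I (proj1_sig (mu w))) : Omega -> \bar R),
      measurable_fun setT (fun w => growthN d1 I (proj1_sig (mu w))) &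
      measurable_fun setT ((fun w => lipN d1 I (proj1_sig (mu w))) : Omega -> \bar R)].
Proof.
split.
- by apply: (@LSC_meas R d1 d3 I _ _ mu mu_meas); exact: LSC_size.
- by apply: (@LSC_meas R d1 d3 I _ _ mu mu_meas); exact: LSC_growth.
- by apply: (@LSC_meas R d1 d3 I _ _ mu mu_meas); exact: LSC_lip.
Qed.
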